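(* Let $p=p_1,\dots,p_m\in(\mathbb R^d)^m$ and $q=q_1,\dots,q_k\in(\mathbb R^d)^k$ with $\mathrm d_{dF}(p,q)\le1$ (with respect to the Euclidean metric). Let $T$ be an optimal traversal of $p$ and $q$ whose traversal graph $G_T$ has at most $k$ connected components, each of which is a star, and let $X_1,\dots,X_l\subseteq\mathbb R^d$ ($l\le k$) be the sets of points $\{p_i: (p\text{-vertex } i)\in K\}\cup\{q_j:(q\text{-vertex } j)\in K\}$ for the connected components $K$ of $G_T$. Let $\delta=4dk$ and let $z$ be uniform in $[0,\delta]$. Then \[ \Pr_z\big[\exists i\in\{1,\dots,l\}\ \exists x,y\in X_i:\ g_{\delta,z}(x)\ne g_{\delta,z}(y)\big]\le\frac12. \]
   Context: For $p\in(\mathbb R^d)^m$ and $q\in(\mathbb R^d)^k$, a traversal is a sequence of index pairs $(i_1,j_1),\dots,(i_t,j_t)$ with $(i_1,j_1)=(1,1)$, $(i_t,j_t)=(m,k)$, and for every $u<t$: $i_{u+1}-i_u\in\{0,1\}$, $j_{u+1}-j_u\in\{0,1\}$ and $(i_{u+1}-i_u)+(j_{u+1}-j_u)\ge1$; its cost is $\max_u\|p_{i_u}-q_{j_u}\|$, and $\mathrm d_{dF}(p,q)$ is the minimum cost over all traversals; a traversal is optimal if its cost equals $\mathrm d_{dF}(p,q)$. The traversal graph $G_T$ is the bipartite graph with vertex set $\{1,\dots,m\}\sqcup\{1,\dots,k\}$ (indices of vertices of $p$ and of $q$) and an edge between $p$-vertex $i$ and $q$-vertex $j$ for every pair $(i,j)\in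 T$. For $\delta>0$, $z\in[0,\delta]$, $g_{\delta,z}(x)=(\lfloor(x_1-z)/\delta\rfloor,\dots,\lfloor(x_d-z)/\delta\rfloor)$ for $x\in\mathbb R^d$. *)

(* Defs.v *)
From Stdlib Require Import Reals Lra Lia List Relations ClassicalEpsilon.
Import ListNotations.
Open Scope R_scope.

(* A point of R^d is a function nat -> R; only coordinates 0..d-1 matter. *)
Definition point := nat -> R.

Definition edist (d : nat) (x y : point) : R :=
  sqrt (fold_right Rplus 0 (map (fun c => (x c - y c) ^ 2) (seq 0 d))).

(* Curves: p : nat -> point with vertices p 1, ..., p m (1-based as in the paper). *)
Definition step (a b : nat * nat) : Prop :=
  let di := (fst b - fst a)%nat in
  let dj := (snd b - snd a)%nat in
  (fst a <= fst b /\ fst b <= S (fst a))%nat /\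
  (snd a <= snd b /\ snd b <= S (snd a))%nat /\
  (1 <= di + dj)%nat.

Definition is_traversal (m k : nat) (T : list (nat * nat)) : Prop :=
  T <> [] /\ hd_error T = Some (1%nat, 1%nat) /\ last T (0%nat, 0%nat) = (m, k) /\
  forall u : nat, (S u < length T)%nat -> step (nth u T (0%nat,0%nat)) (nth (S u) T (0%nat,0%nat)).

Definition trav_cost (d : nat) (p q : nat -> point) (T : list (nat * nat)) : R :=
  fold_right Rmax 0 (map (fun ij => edist d (p (fst ij)) (q (snd ij))) T).

Definition dF_le (d m k : nat) (p q : nat -> point) (r : R) : Prop :=
  exists T, is_traversal m k T /\ trav_cost d p q T <= r.

Definition optimal_traversal (d m k : nat) (p q : nat -> point) (T : list (nat * nat)) : Prop :=
  is_traversal m k T /\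
  forall T', is_traversal m k T' -> trav_cost d p q T <= trav_cost d p q T'.

Inductive vtx : Type := PV (i : nat) | QV (j : nat).

Definition valid_vtx (m k : nat) (v : vtx) : Prop :=
  match v with PV i => (1 <= i <= m)%nat | QV j => (1 <= j <= k)%nat end.

Definition tg_edge (T : list (nat * nat)) (u v : vtx) : Prop :=
  exists i j, In (i, j) T /\ ((u = PV i /\ v = QV j) \/ (u = QV j /\ v = PV i)).

Definition tg_conn (T : list (nat * nat)) : vtx -> vtx -> Prop :=
  clos_refl_trans vtx (tg_edge T).

Definition at_most_components (m k : nat) (T : list (nat * nat)) (n : nat) : Prop :=
  exists reps : list vtx, (length reps <= n)%nat /\
    forall v, valid_vtx m k v -> exists r, In r reps /\ tg_conn T v r.

Definition components_are_stars (m k : nat) (T : list (nat * nat)) : Prop :=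
  forall v, valid_vtx m k v ->
    exists c, tg_conn T v c /\
      forall u w, tg_conn T v u -> tg_conn T v w -> tg_edge T u w -> u = c \/ w = c.

Definition vpt (p q : nat -> point) (v : vtx) : point :=
  match v with PV i => p i | QV j => q j end.

(* g_{delta,z}(x), coordinatewise (Int_part = floor) *)
Definition gcell (delta z : R) (x : point) : nat -> Z :=
  fun c => Int_part ((x c - z) / delta).

Definition bad_event (d m k : nat) (p q : nat -> point) (T : list (nat * nat))
  (delta z : R) : Prop :=
  exists u v, valid_vtx m k u /\ tg_conn T u v /\
    exists c, (c < d)%nat /\ gcell delta z (vpt p q u) c <> gcell delta z (vpt p q v) c.

Definition indicator (P : R -> Prop) : R -> R :=
  fun z => if excluded_middle_informative (P z) then 1 else 0.

(* Main.v *)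
Require Import Defs.
From Stdlib Require Import Reals List Lra Lia Relations ClassicalEpsilon Classical.
From Coquelicot Require Import Coquelicot.
Import ListNotations.
Open Scope R_scope.

Lemma Ip_mono x y : x <= y -> (Int_part x <= Int_part y)%Z.
Proof.
  intros H. destruct (base_Int_part x) as [H1 H2]. destruct (base_Int_part y) as [H3 H4].
  assert (IZR (Int_part x) < IZR (Int_part y + 1)) by (rewrite plus_IZR; lra).
  apply lt_IZR in H0. lia.
Qed.

Lemma is_RInt_constR a b c : is_RInt (fun _ => c) a b ((b-a)*c).
Proof. exact (@is_RInt_const R_NormedModule a b c). Qed.

Definition phi (dl A z : R) : R := IZR (Int_part ((A - z) / dl)).

Lemma phi_int dl A : 0 < dl -> is_RInt (phi dl A) 0 dl (A - dl).
Proof.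
  intros Hd.
  set (n := Int_part (A / dl)).
  set (t := A - IZR n * dl).
  destruct (base_Int_part (A / dl)) as [H1 H2]. fold n in H1, H2.
  assert (Ht0 : 0 <= t).
  { unfold t. assert (IZR n * dl <= A / dl * dl) by (apply Rmult_le_compat_r; lra).
    replace (A / dl * dl) with A in H by (field; lra). lra. }
  assert (Ht1 : t < dl).
  { unfold t. assert ((A / dl - IZR n) * dl < 1 * dl) by (apply Rmult_lt_compat_r; lra).
    replace ((A / dl - IZR n) * dl) with (A - IZR n * dl) in H by (field; lra). lra. }
  assert (Hdec : forall z, (A - z) / dl = IZR n + (t - z) / dl) by (intros; unfold t; field; lra).
  assert (Ha : is_RInt (phi dl A) 0 t ((t - 0) * (IZR n))).
  { apply is_RInt_ext with (f := fun _ => IZR n); [|apply is_RInt_constR].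
    intros z Hz. rewrite Rmin_left in Hz by lra. rewrite Rmax_right in Hz by lra.
    unfold phi. f_equal. apply Int_part_spec. rewrite Hdec.
    set (s := (t - z) / dl). assert (t - z = s * dl) by (unfold s; field; lra).
    assert (0 < s < 1) by nra. lra. }
  assert (Hb : is_RInt (phi dl A) t dl ((dl - t) * (IZR (n - 1)))).
  { apply is_RInt_ext with (f := fun _ => IZR (n-1)); [|apply is_RInt_constR].
    intros z Hz. rewrite Rmin_left in Hz by lra. rewrite Rmax_right in Hz by lra.
    unfold phi. f_equal. apply Int_part_spec. rewrite Hdec, minus_IZR.
    set (s := (t - z) / dl). assert (t - z = s * dl) by (unfold s; field; lra).
    assert (-1 < s < 0) by nra. lra. }
  pose proof (is_RInt_Chasles _ _ _ _ _ _ Ha Hb) as H.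
  replace (A - dl) with (plus ((t - 0) * (IZR n)) ((dl - t) * (IZR (n - 1)))); [exact H|].
  unfold plus; simpl. rewrite minus_IZR. unfold t. ring.
Qed.
Lemma exR_plus (f g : R -> R) a b : ex_RInt f a b -> ex_RInt g a b -> ex_RInt (fun x => f x + g x) a b.
Proof. intros. exact (@ex_RInt_plus R_NormedModule f g a b H H0). Qed.
Lemma exR_minus (f g : R -> R) a b : ex_RInt f a b -> ex_RInt g a b -> ex_RInt (fun x => f x - g x) a b.
Proof. intros. exact (@ex_RInt_minus R_NormedModule f g a b H H0). Qed.
Lemma exR_scal (f : R -> R) a b k : ex_RInt f a b -> ex_RInt (fun x => k * f x) a b.
Proof. intros. exact (@ex_RInt_scal R_NormedModule f a b k H). Qed.
Lemma exR_const a b (c : R) : ex_RInt (fun _ => c) a b.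
Proof. exact (@ex_RInt_const R_NormedModule a b c). Qed.
Lemma exR_abs (f : R -> R) a b : ex_RInt f a b -> ex_RInt (fun x => Rabs (f x)) a b.
Proof. intros. apply ex_RInt_Reals_1, RiemannInt_P16, ex_RInt_Reals_0. exact H. Qed.
Lemma exR_ext (f g : R -> R) a b : (forall x, f x = g x) -> ex_RInt f a b -> ex_RInt g a b.
Proof. intros. apply (@ex_RInt_ext R_NormedModule f g a b); auto. Qed.

Definition ebad (dl a b z : R) : Prop := Int_part ((a - z) / dl) <> Int_part ((b - z) / dl).

Lemma ex_phi dl A : 0 < dl -> ex_RInt (phi dl A) 0 dl.
Proof. intros. eexists. apply phi_int. auto. Qed.

Lemma Rabs_cases x : Rabs x = x \/ Rabs x = - x.
Proof. unfold Rabs. destruct (Rcase_abs x); auto. Qed.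

Lemma ex_ebad dl a b : 0 < dl -> ex_RInt (indicator (ebad dl a b)) 0 dl.
Proof.
  intros Hd.
  set (D := fun z => phi dl a z - phi dl b z).
  apply exR_ext with (f := fun z => / 2 * (1 + Rabs (D z) - Rabs (1 - Rabs (D z)))).
  - intros z. unfold indicator, D, phi, ebad.
    destruct (excluded_middle_informative _) as [Hn|Hn].
    + rewrite <- minus_IZR.
      assert (Hk : (Int_part ((a - z) / dl) - Int_part ((b - z) / dl) >= 1 \/
                   Int_part ((a - z) / dl) - Int_part ((b - z) / dl) <= -1)%Z) by lia.
      set (k := (Int_part ((a - z) / dl) - Int_part ((b - z) / dl))%Z) in *.
      destruct Hk as [Hk|Hk].
      * assert (IZR k >= 1) by (apply Rle_ge, IZR_le; lia).
        rewrite (Rabs_right (IZR k)) by lra. rewrite Rabs_left1 by lra. field.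
      * assert (IZR k <= -1) by (apply IZR_le; lia).
        rewrite (Rabs_left1 (IZR k)) by lra. rewrite Rabs_left1 by lra. field.
    + assert (Int_part ((a - z) / dl) = Int_part ((b - z) / dl)) by tauto.
      rewrite H. replace (IZR _ - IZR _) with 0 by ring. rewrite Rabs_R0.
      replace (1 - 0) with 1 by ring. rewrite Rabs_right by lra. field.
  - apply exR_scal. apply exR_minus.
    + apply exR_plus; [apply exR_const|]. apply exR_abs. apply exR_minus; apply ex_phi; auto.
    + apply exR_abs. apply exR_minus; [apply exR_const|]. apply exR_abs. apply exR_minus; apply ex_phi; auto.
Qed.

Lemma ex_union dl (L : list (R * R)) : 0 < dl ->
  ex_RInt (indicator (fun z => exists x, In x L /\ ebad dl (fst x) (snd x) z)) 0 dl.
Proof.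
  intros Hd. induction L as [|x L IH].
  - apply exR_ext with (f := fun _ => 0); [|apply exR_const].
    intros z. unfold indicator. destruct (excluded_middle_informative _) as [[y [[] _]]|]; auto.
  - set (f := indicator (ebad dl (fst x) (snd x))).
    set (g := indicator (fun z => exists x, In x L /\ ebad dl (fst x) (snd x) z)).
    apply exR_ext with (f := fun z => / 2 * (f z + g z + Rabs (f z - g z))).
    + intros z. unfold f, g, indicator.
      destruct (excluded_middle_informative (ebad dl (fst x) (snd x) z)) as [H1|H1];
      destruct (excluded_middle_informative (exists x0, In x0 L /\ ebad dl (fst x0) (snd x0) z)) as [H2|H2];
      destruct (excluded_middle_informative (exists x0, In x0 (x :: L) /\ ebad dl (fst x0) (snd x0) z)) as [H3|H3].
      all: try (exfalso; apply H3; first [exists x; simpl; tauto | destruct H2 as [y [? ?]]; exists y; simpl; tauto]).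
      all: try (exfalso; destruct H3 as [y [[<-|Hy] Hb]]; [tauto | apply H2; exists y; tauto]).
      all: try (replace (1-1) with 0 by ring); try (replace (1-0) with 1 by ring);
           try (replace (0-1) with (-1) by ring); try (replace (0-0) with 0 by ring).
      all: try rewrite Rabs_R0; try rewrite Rabs_R1; try rewrite Rabs_Ropp; try rewrite Rabs_R1; try field.
      all: try (rewrite Rabs_left by lra; field).
    + apply exR_scal. apply exR_plus; [apply exR_plus|]; auto.
      * apply ex_ebad; auto.
      * apply exR_abs, exR_minus; auto. apply ex_ebad; auto.
Qed.
Definition term (dl A z : R) := phi dl (A + 1) z - phi dl (A - 1) z.
Definition Ssum (dl : R) (As : list R) (z : R) : R :=
  fold_right (fun A acc => term dl A z + acc) 0 As.

Lemma Ssum_int dl As : 0 < dl -> is_RInt (Ssum dl As) 0 dl (2 * INR (length As)).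
Proof.
  intros Hd. induction As as [|A As IH].
  - simpl. replace (2 * 0) with ((dl - 0) * 0) by ring. apply is_RInt_constR.
  - pose proof (@is_RInt_minus R_NormedModule _ _ _ _ _ _ (phi_int dl (A+1) Hd) (phi_int dl (A-1) Hd)) as H.
    pose proof (@is_RInt_plus R_NormedModule _ _ _ _ _ _ H IH) as H'.
    replace (2 * INR (length (A :: As))) with
      (plus (minus (A + 1 - dl) (A - 1 - dl)) (2 * INR (length As))).
    + exact H'.
    + change (length (A :: As)) with (S (length As)). rewrite S_INR. unfold minus, opp; simpl. unfold plus; simpl. ring.
Qed.

Lemma div_mono dl x y z : 0 < dl -> x <= y -> (x - z) / dl <= (y - z) / dl.
Proof. intros. unfold Rdiv. apply Rmult_le_compat_r. left; apply Rinv_0_lt_compat; auto. lra. Qed.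

Lemma term_nonneg dl A z : 0 < dl -> 0 <= term dl A z.
Proof.
  intros. unfold term, phi. rewrite <- minus_IZR. apply IZR_le.
  assert (Int_part ((A - 1 - z) / dl) <= Int_part ((A + 1 - z) / dl))%Z by (apply Ip_mono, div_mono; lra).
  lia.
Qed.

Lemma Ssum_nonneg dl As z : 0 < dl -> 0 <= Ssum dl As z.
Proof. intros. induction As; simpl. lra. pose proof (term_nonneg dl a z H). lra. Qed.

Lemma Ssum_ge dl As A z : 0 < dl -> In A As -> term dl A z <= Ssum dl As z.
Proof.
  intros Hd. induction As as [|B As IH]; simpl; [tauto|]. intros [<-|H].
  - pose proof (Ssum_nonneg dl As z Hd). lra.
  - pose proof (IH H). pose proof (term_nonneg dl B z Hd). lra.
Qed.

Lemma Rabs_le_inv (x b : R) : Rabs x <= b -> -b <= x <= b.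
Proof. unfold Rabs. destruct (Rcase_abs x); lra. Qed.

Lemma term_ge1 dl A a b z : 0 < dl -> Rabs (a - A) <= 1 -> Rabs (b - A) <= 1 ->
  Int_part ((a - z) / dl) <> Int_part ((b - z) / dl) -> 1 <= term dl A z.
Proof.
  intros Hd Ha Hb Hne. apply Rabs_le_inv in Ha. apply Rabs_le_inv in Hb.
  assert (Int_part ((A - 1 - z) / dl) <= Int_part ((a - z) / dl))%Z by (apply Ip_mono, div_mono; lra).
  assert (Int_part ((a - z) / dl) <= Int_part ((A + 1 - z) / dl))%Z by (apply Ip_mono, div_mono; lra).
  assert (Int_part ((A - 1 - z) / dl) <= Int_part ((b - z) / dl))%Z by (apply Ip_mono, div_mono; lra).
  assert (Int_part ((b - z) / dl) <= Int_part ((A + 1 - z) / dl))%Z by (apply Ip_mono, div_mono; lra).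
  unfold term, phi. rewrite <- minus_IZR. apply IZR_le. lia.
Qed.

Lemma edge_sym T u v : tg_edge T u v -> tg_edge T v u.
Proof. intros [i [j [H [[-> ->]|[-> ->]]]]]; exists i, j; tauto. Qed.

Lemma conn_sym T u v : tg_conn T u v -> tg_conn T v u.
Proof.
  unfold tg_conn. intros H. induction H.
  - apply rt_step, edge_sym; auto.
  - apply rt_refl.
  - eapply rt_trans; eauto.
Qed.

Lemma star_lemma T u0 c : tg_conn T u0 c ->
  (forall a b, tg_conn T u0 a -> tg_conn T u0 b -> tg_edge T a b -> a = c \/ b = c) ->
  forall w, tg_conn T u0 w -> w = c \/ tg_edge T c w.
Proof.
  intros Hc Hs w Hw.
  assert (Hcw : tg_conn T c w) by (eapply rt_trans; [apply conn_sym; exact Hc| exact Hw]).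
  apply clos_rt_rtn1 in Hcw. inversion Hcw as [|y z Hyz Hcy]; subst; [left; auto|].
  apply clos_rtn1_rt in Hcy.
  assert (H : tg_conn T u0 y) by (apply rt_trans with c; [exact Hc | exact Hcy]).
  destruct (Hs y w H Hw Hyz) as [E|E]; [subst y; right; exact Hyz | left; exact E].
Qed.

Definition Tverts (T : list (nat * nat)) : list vtx :=
  map (fun ij => PV (fst ij)) T ++ map (fun ij => QV (snd ij)) T.

Lemma conn_in T u v : tg_conn T u v -> v = u \/ In v (Tverts T).
Proof.
  intros H. apply clos_rt_rtn1 in H. inversion H as [|y z Hyz _]; subst; [left; auto|right].
  destruct Hyz as [i [j [Hin [[_ ->]|[_ ->]]]]]; unfold Tverts; apply in_or_app.
  - right. apply in_map_iff. exists (i, j); auto.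
  - left. apply in_map_iff. exists (i, j); auto.
Qed.

Lemma sublist_ex (X : Type) (l : list X) (P : X -> Prop) :
  exists l', forall x, In x l' <-> In x l /\ P x.
Proof.
  induction l as [|a l [l' IH]].
  - exists nil; simpl; tauto.
  - destruct (classic (P a)).
    + exists (a :: l'). intros x; simpl. rewrite IH. split; [intros [<-|[]]|intros [[<-|]]]; tauto.
    + exists l'. intros x; simpl. rewrite IH. split; [tauto|]. intros [[<-|] ]; tauto.
Qed.

Lemma in_fold_max x l : In x l -> x <= fold_right Rmax 0 l.
Proof.
  induction l; simpl; [tauto|]. intros [->|H]; [apply Rmax_l|].
  eapply Rle_trans; [apply IHl; auto|apply Rmax_r].
Qed.

Lemma in_fold_sum (g : nat -> R) c l : (forall x, 0 <= g x) -> In c l -> g c <= fold_right Rplus 0 (map g l).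
Proof.
  intros Hg. induction l; simpl; [tauto|]. intros [->|H].
  - assert (0 <= fold_right Rplus 0 (map g l)).
    { clear IHl. induction l; simpl; [lra|]. pose proof (Hg a). lra. }
    lra.
  - pose proof (IHl H). pose proof (Hg a). lra.
Qed.

Lemma coord_le d (x y : point) c : (c < d)%nat -> Rabs (x c - y c) <= edist d x y.
Proof.
  intros Hc. unfold edist. rewrite <- sqrt_Rsqr_abs. apply sqrt_le_1_alt.
  rewrite Rsqr_pow2.
  apply (in_fold_sum (fun c => (x c - y c) ^ 2)).
  - intros; apply pow2_ge_0.
  - apply in_seq; lia.
Qed.
Lemma edge_bound d m k p q T (hdF : dF_le d m k p q 1) (hT : optimal_traversal d m k p q T) :
  forall i j c, In (i, j) T -> (c < d)%nat -> Rabs (p i c - q j c) <= 1.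
Proof.
  intros i j c Hin Hc. destruct hdF as [T0 [HT0 Hc0]]. destruct hT as [_ Hopt].
  specialize (Hopt T0 HT0).
  eapply Rle_trans; [apply coord_le; exact Hc|].
  eapply Rle_trans; [|exact Hc0]. eapply Rle_trans; [|exact Hopt].
  unfold trav_cost. apply in_fold_max. apply in_map_iff. exists (i, j); auto.
Qed.

Lemma length_flat (X Y : Type) (f : X -> list Y) n l :
  (forall x, length (f x) = n) -> length (flat_map f l) = (n * length l)%nat.
Proof. intros H. induction l; simpl; [lia|]. rewrite length_app, H, IHl. lia. Qed.

Lemma ind_ext (P Q : R -> Prop) : (forall z, P z <-> Q z) -> forall z, indicator P z = indicator Q z.
Proof.
  intros H z. unfold indicator.
  destruct (excluded_middle_informative (P z)); destruct (excluded_middle_informative (Q z)); auto;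
  exfalso; firstorder.
Qed.

Theorem mainTheorem12 (d m k : nat) (p q : nat -> point) (T : list (nat * nat))
  (hd : (1 <= d)%nat) (hm : (1 <= m)%nat) (hk : (1 <= k)%nat)
  (hdF : dF_le d m k p q 1)
  (hT : optimal_traversal d m k p q T)
  (hcomp : at_most_components m k T k)
  (hstar : components_are_stars m k T) :
  let delta := 4 * INR d * INR k in
  exists pr : Riemann_integrable (indicator (bad_event d m k p q T delta)) 0 delta,
    RiemannInt pr / delta <= 1 / 2.
Proof.
  intros delta.
  assert (Hd1 : 1 <= INR d) by (apply (le_INR 1); lia).
  assert (Hk1 : 1 <= INR k) by (apply (le_INR 1); lia).
  assert (Hdl : 0 < delta) by (unfold delta; nra).
  set (Vu := map PV (seq 1 m) ++ map QV (seq 1 k)).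
  set (X := list_prod (list_prod Vu (Vu ++ Tverts T)) (seq 0 d)).
  destruct (sublist_ex _ X (fun x => valid_vtx m k (fst (fst x)) /\ tg_conn T (fst (fst x)) (snd (fst x))))
    as [l' Hl'].
  set (L := map (fun x => (vpt p q (fst (fst x)) (snd x), vpt p q (snd (fst x)) (snd x))) l').
  assert (Heq : forall z, bad_event d m k p q T delta z <->
                  exists x, In x L /\ ebad delta (fst x) (snd x) z).
  { intros z. split.
    - intros [u [v [Hu [Huv [c [Hc Hne]]]]]].
      exists (vpt p q u c, vpt p q v c). split; [|exact Hne].
      unfold L. apply in_map_iff. exists ((u, v), c). split; [reflexivity|].
      apply Hl'. simpl. split; [|tauto].
      assert (HuV : In u Vu).
      { unfold Vu. apply in_or_app. destruct u as [i|j]; simpl in Hu.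
        - left. apply in_map, in_seq. lia.
        - right. apply in_map, in_seq. lia. }
      unfold X. apply in_prod; [apply in_prod|apply in_seq; lia]; auto.
      apply in_or_app. destruct (conn_in T u v Huv) as [->|H]; auto.
    - intros [x [Hx Hb]]. unfold L in Hx. apply in_map_iff in Hx.
      destruct Hx as [[[u v] c] [<- Hx]]. apply Hl' in Hx. simpl in Hx.
      destruct Hx as [Hx [Hu Huv]]. exists u, v. split; [auto|]. split; [auto|].
      exists c. unfold X in Hx. apply in_prod_iff in Hx. destruct Hx as [_ Hc].
      apply in_seq in Hc. split; [lia|]. exact Hb. }
  assert (Hex : ex_RInt (indicator (bad_event d m k p q T delta)) 0 delta).
  { eapply exR_ext; [|apply (ex_union delta L Hdl)]. intros z. symmetry. apply ind_ext, Heq. }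
  exists (ex_RInt_Reals_0 _ _ _ Hex).
  rewrite <- RInt_Reals.
  assert (Hcen : exists cen : vtx -> vtx, forall r u, valid_vtx m k u -> tg_conn T u r ->
            forall w, tg_conn T u w -> w = cen r \/ tg_edge T (cen r) w).
  { assert (Hc : forall r, exists c, forall u, valid_vtx m k u -> tg_conn T u r ->
            forall w, tg_conn T u w -> w = c \/ tg_edge T c w).
    { intros r. destruct (classic (exists u, valid_vtx m k u /\ tg_conn T u r)) as [[u0 [Hv Hc]]|Hn].
      - destruct (hstar u0 Hv) as [c [Hc0 Hs]]. exists c. intros u Hu Hur w Huw.
        apply (star_lemma T u0 c Hc0 Hs).
        apply rt_trans with r; [exact Hc|]. apply rt_trans with u; [apply conn_sym; exact Hur|exact Huw].
      - exists r. intros u Hu Hur. exfalso. apply Hn. eauto. }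
    exists (fun r => proj1_sig (constructive_indefinite_description _ (Hc r))).
    intros r. exact (proj2_sig (constructive_indefinite_description _ (Hc r))). }
  destruct Hcen as [cen Hcen].
  destruct hcomp as [reps [Hlen Hrep]].
  set (As := flat_map (fun r => map (fun c => vpt p q (cen r) c) (seq 0 d)) reps).
  assert (HlenAs : length As = (d * length reps)%nat).
  { apply length_flat. intros; rewrite length_map, length_seq; auto. }
  assert (Hle : RInt (indicator (bad_event d m k p q T delta)) 0 delta <= RInt (Ssum delta As) 0 delta).
  { apply RInt_le; [lra|exact Hex|eexists; apply Ssum_int; auto|].
    intros z _. unfold indicator. destruct (excluded_middle_informative _) as [Hb|Hb];
      [|apply Ssum_nonneg; auto].
    destruct Hb as [u [v [Hu [Huv [c [Hc Hne]]]]]].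
    destruct (Hrep u Hu) as [r [Hr Hur]].
    assert (Hnear : forall w, w = cen r \/ tg_edge T (cen r) w ->
              Rabs (vpt p q w c - vpt p q (cen r) c) <= 1).
    { intros w [->|He].
      - replace (_ - _) with 0 by ring. rewrite Rabs_R0. lra.
      - destruct He as [i [j [Hin [[-> ->]|[-> ->]]]]]; simpl.
        + rewrite Rabs_minus_sym. apply (edge_bound d m k p q T hdF hT i j c Hin Hc).
        + apply (edge_bound d m k p q T hdF hT i j c Hin Hc). }
    eapply Rle_trans; [|apply (Ssum_ge delta As (vpt p q (cen r) c) z Hdl)].
    - apply term_ge1 with (a := vpt p q u c) (b := vpt p q v c); auto.
      + apply Hnear. apply (Hcen r u Hu Hur u). apply rt_refl.
      + apply Hnear. apply (Hcen r u Hu Hur v Huv).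
    - unfold As. apply in_flat_map. exists r. split; auto. apply in_map, in_seq. lia. }
  rewrite (is_RInt_unique _ _ _ _ (Ssum_int delta As Hdl)) in Hle.
  rewrite HlenAs, mult_INR in Hle.
  assert (INR (length reps) <= INR k) by (apply le_INR; auto).
  unfold Rdiv. apply Rmult_le_reg_r with delta; auto.
  rewrite Rmult_assoc, Rinv_l by lra. unfold delta in *. nra.
Qed.
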